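(* Let $\mathcal{U}$ be a Hilbert space, $\mathcal{W},\mathcal{Y}$ reflexive Banach spaces, $\mathcal{G}$ a Hilbert space, $g^\delta\in\mathcal{G}$, $\alpha>0$, $A\in L(\mathcal{Y},\mathcal{W}^* )$ continuously invertible, $B\in L(\mathcal{U},\mathcal{W}^* )$, $C\in L(\mathcal{Y},\mathcal{G})$, and let $\mathcal{R}_\alpha=\frac\alpha2\|\cdot\|_\mathcal{U}^2$ and $J_\alpha(u,y)=\frac12\|Cy-g^\delta\|_\mathcal{G}^2+\mathcal{R}_\alpha(u)$. Let $\mathcal{U}_h\subset\mathcal{U}$, $\mathcal{Y}_h\subset\mathcal{Y}$, $\mathcal{W}_h\subset\mathcal{W}$ be finite-dimensional subspaces. Let $(\bar u,\bar y)$ minimize $J_\alpha(u,y)$ over $\mathcal{U}\times\mathcal{Y}$ subject to $Ay=Bu$, and let $(\bar u_h,\bar y_h)$ minimize $J_\alpha$ over $\mathcal{U}_h\times\mathcal{Y}_h$ subject to $\langle Ay-Bu,w_h\rangle_{\mathcal{W}^*,\mathcal{W}}=0$ for all $w_h\in\mathcal{W}_h$, with $\bar w_h\in\mathcal{W}_h$ such that $(\bar u_h,\bar y_h,\bar w_h)$ satisfies the discrete optimality system $$\langle C^*(C\bar y_h-g^\delta)+A^*\bar w_h,y_h\rangle_{\mathcal{Y}^*,\mathcal{Y}}=0\ \ \forall y_h\in\mathcal{Y}_h,\qquad \alpha\bar u_h-P_{\mathcal{U}_h}B^*\bar w_h=0,\qquad \langle A\bar y_h-B\bar u_h,w_h\rangle_{\mathcal{W}^*,\mathcal{W}}=0\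 \ \forall w_h\in\mathcal{W}_h.$$ Define the residuals $$\rho_w:=C^*(C\bar y_h-g^\delta)+A^*\bar w_h\in\mathcal{Y}^*,\qquad \rho_u:=\alpha\bar u_h-B^*\bar w_h\in\mathcal{U},\qquad \rho_y:=A\bar y_h-B\bar u_h\in\mathcal{W}^*.$$ Let $\sigma,\gamma$ satisfy either ($\sigma=4$ and $\gamma\ge2$) or ($\sigma>4$ and $\gamma>\frac{2\sigma}{\sigma+\sqrt{\sigma^2-4\sigma}}$). Then $$\alpha\|\bar u_h-\bar u\|_\mathcal{U}^2+\|C\bar y_h-C\bar y\|_\mathcal{G}^2\le\frac\gamma\alpha\|B^*(A^* )^{-1}\rho_w+\rho_u\|_\mathcal{U}^2+\sigma\|CA^{-1}\rho_y\|_\mathcal{G}^2,$$ $$J_\alpha(\bar u_h,\bar y_h)-J_\alpha(\bar u,\bar y)\le\frac1{2\alpha}\|B^*(A^* )^{-1}\rho_w+\rho_u\|_\mathcal{U}^2+(C\bar y_h-g^\delta,CA^{-1}\rho_y)_\mathcal{G}.$$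
   Context: Adjoints: $A^*\in L(\mathcal{W},\mathcal{Y}^* )$ with $\langle Ay,w\rangle_{\mathcal{W}^*,\mathcal{W}}=\langle y,A^*w\rangle_{\mathcal{Y},\mathcal{Y}^*}$; $B^*\in L(\mathcal{W},\mathcal{U})$ with $\langle Bu,w\rangle_{\mathcal{W}^*,\mathcal{W}}=(u,B^*w)_\mathcal{U}$; $C^*\in L(\mathcal{G},\mathcal{Y}^* )$ with $(Cy,g)_\mathcal{G}=\langle y,C^*g\rangle_{\mathcal{Y},\mathcal{Y}^*}$. $P_{\mathcal{U}_h}$ is the orthogonal projection of $\mathcal{U}$ onto $\mathcal{U}_h$. *)

(* Defs.v *)
From mathcomp Require Import all_boot all_order all_algebra.
From mathcomp Require Import all_classical all_reals all_analysis.
Set Implicit Arguments. Unset Strict Implicit. Unset Printing Implicit Defensive.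
Import Order.TTheory GRing.Theory Num.Theory.
Import numFieldNormedType.Exports.
Local Open Scope classical_set_scope.
Local Open Scope ring_scope.

Section Defs.
Variable R : realType.

(* (ip) is an inner product on V inducing the norm of V:
   symmetric, linear in the first argument, and ip x x = |x|^2.
   A Hilbert space is a complete normed space (completeNormedModType)
   carrying such an inner product. *)
Definition is_inner (V : normedModType R) (ip : V -> V -> R) :=
  [/\ forall x y, ip x y = ip y x,
      forall a x y z, ip (a *: x + y) z = a * ip x z + ip y z &
      forall x, ip x x = `|x| ^+ 2].

Definition is_dual (W : normedModType R) (f : W -> R) :=
  (forall a x y, f (a *: x + y) = a * f x + f y) /\
  exists M : R, forall w, `|f w| <= M * `|w|.

Definition dual_norm_le (W : normedModType R) (f : W -> R) (c : R) :=
  forall w, `|f w| <= c * `|w|.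

(* W is reflexive: every bounded linear functional on W^* is the evaluation
   at some w in W (surjectivity of the canonical embedding W -> W^{**} ). *)
Definition reflexive_space (W : normedModType R) :=
  forall phi : (W -> R) -> R,
    (forall a f g, is_dual f -> is_dual g ->
       phi (fun w => a * f w + g w) = a * phi f + phi g) ->
    (exists M : R, forall f c, is_dual f -> 0 <= c -> dual_norm_le f c ->
       `|phi f| <= M * c) ->
    exists w : W, forall f, is_dual f -> phi f = f w.

Definition bounded_linear (V1 V2 : normedModType R) (T : V1 -> V2) :=
  (forall a x y, T (a *: x + y) = a *: T x + T y) /\
  exists M : R, forall x, `|T x| <= M * `|x|.

(* Bounded linear operators into a dual space: L(V, W^{*}); T x w = <T x, w>. *)
Definition dual_op (V W : normedModType R) (T : V -> W -> R) :=
  [/\ forall x, is_dual (T x),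
      forall a x y w, T (a *: x + y) w = a * T x w + T y w &
      exists M : R, forall x w, `|T x w| <= M * `|x| * `|w|].

Definition cont_invertible (Y W : normedModType R) (A : Y -> W -> R) :=
  [/\ dual_op A,
      forall y, (forall w, A y w = 0) -> y = 0,
      forall f, is_dual f -> exists y, forall w, A y w = f w &
      exists M : R, forall y c, 0 <= c -> dual_norm_le (A y) c -> `|y| <= M * c].

Definition fin_subspace (V : lmodType R) (S : set V) :=
  exists s : seq V,
    S = [set v | exists c : 'I_(size s) -> R, v = \sum_(i < size s) c i *: s`_i].

Definition orth_proj (V : normedModType R) (ip : V -> V -> R) (S : set V) (x : V) : V :=
  xget 0 [set p | S p /\ forall v, S v -> ip (x - p) v = 0].

Definition op_inv (Y W : normedModType R) (A : Y -> W -> R) (f : W -> R) : Y :=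
  xget 0 [set y | forall w, A y w = f w].

Definition adj_dual (Y W : normedModType R) (A : Y -> W -> R) (w : W) : Y -> R :=
  fun y => A y w.

Definition adj_dual_inv (Y W : normedModType R) (A : Y -> W -> R) (f : Y -> R) : W :=
  xget 0 [set w | forall y, A y w = f y].

Definition adj_obs (Y G : normedModType R) (ipG : G -> G -> R) (C : Y -> G) (g : G)
  : Y -> R := fun y => ipG (C y) g.

Definition Jalpha (U Y G : normedModType R) (C : Y -> G) (g : G) (alpha : R)
  (u : U) (y : Y) : R :=
  2^-1 * `|C y - g| ^+ 2 + alpha / 2 * `|u| ^+ 2.

End Defs.

(* Main.v *)
Require Import Defs.
From mathcomp Require Import all_boot all_order all_algebra.
From mathcomp Require Import all_classical all_reals all_analysis.
From mathcomp Require Import ring lra.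
Set Implicit Arguments. Unset Strict Implicit.
Import Order.TTheory GRing.Theory Num.Theory.
Import numFieldNormedType.Exports.
Local Open Scope classical_set_scope.
Local Open Scope ring_scope.
Lemma lin0 (R : realType) (V : lmodType R) (f : V -> R)
  (h : forall a x y, f (a *: x + y) = a * f x + f y) : f 0 = 0.
Proof. have := h 1 0 0; rewrite scaler0 addr0 mul1r => E; lra. Qed.

Lemma linD (R : realType) (V : lmodType R) (f : V -> R)
  (h : forall a x y, f (a *: x + y) = a * f x + f y) x y : f (x + y) = f x + f y.
Proof. by have := h 1 x y; rewrite scale1r mul1r. Qed.

Lemma linZ (R : realType) (V : lmodType R) (f : V -> R)
  (h : forall a x y, f (a *: x + y) = a * f x + f y) a x : f (a *: x) = a * f x.
Proof. by have := h a x 0; rewrite addr0 (lin0 h) addr0. Qed.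

Lemma linB (R : realType) (V : lmodType R) (f : V -> R)
  (h : forall a x y, f (a *: x + y) = a * f x + f y) x y : f (x - y) = f x - f y.
Proof. by rewrite (linD h) -scaleN1r (linZ h) mulN1r. Qed.

Lemma vlin0 (R : realType) (V1 V2 : lmodType R) (f : V1 -> V2)
  (h : forall a x y, f (a *: x + y) = a *: f x + f y) : f 0 = 0.
Proof.
have := h 1 0 0; rewrite scaler0 addr0 scale1r => E.
by apply/eqP; rewrite -(addrI (f 0) (etrans (esym E) (esym (addr0 _)))).
Qed.

Lemma vlinD (R : realType) (V1 V2 : lmodType R) (f : V1 -> V2)
  (h : forall a x y, f (a *: x + y) = a *: f x + f y) x y : f (x + y) = f x + f y.
Proof. by have := h 1 x y; rewrite !scale1r. Qed.

Lemma vlinZ (R : realType) (V1 V2 : lmodType R) (f : V1 -> V2)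
  (h : forall a x y, f (a *: x + y) = a *: f x + f y) a x : f (a *: x) = a *: f x.
Proof. by have := h a x 0; rewrite !addr0 (vlin0 h) addr0. Qed.

Lemma vlinB (R : realType) (V1 V2 : lmodType R) (f : V1 -> V2)
  (h : forall a x y, f (a *: x + y) = a *: f x + f y) x y : f (x - y) = f x - f y.
Proof. by rewrite (vlinD h) -scaleN1r (vlinZ h) scaleN1r. Qed.

Section IP.
Lemma ipDl (R : realType) (V : normedModType R) (ip : V -> V -> R) (h : is_inner ip) x y z :
  ip (x + y) z = ip x z + ip y z.
Proof. case: h => _ hl _; exact: (linD (f := ip^~ z)). Qed.
Lemma ipZl (R : realType) (V : normedModType R) (ip : V -> V -> R) (h : is_inner ip) a x z :
  ip (a *: x) z = a * ip x z.
Proof. case: h => _ hl _; exact: (linZ (f := ip^~ z)). Qed.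
Lemma ipBl (R : realType) (V : normedModType R) (ip : V -> V -> R) (h : is_inner ip) x y z :
  ip (x - y) z = ip x z - ip y z.
Proof. case: h => _ hl _; exact: (linB (f := ip^~ z)). Qed.
Lemma ipDr (R : realType) (V : normedModType R) (ip : V -> V -> R) (h : is_inner ip) x y z :
  ip z (x + y) = ip z x + ip z y.
Proof. have [hs _ _] := h; by rewrite !(hs z) (ipDl h). Qed.
Lemma ipZr (R : realType) (V : normedModType R) (ip : V -> V -> R) (h : is_inner ip) a x z :
  ip z (a *: x) = a * ip z x.
Proof. have [hs _ _] := h; by rewrite !(hs z) (ipZl h). Qed.
Lemma ipBr (R : realType) (V : normedModType R) (ip : V -> V -> R) (h : is_inner ip) x y z :
  ip z (x - y) = ip z x - ip z y.
Proof. have [hs _ _] := h; by rewrite !(hs z) (ipBl h). Qed.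
Lemma norm2D (R : realType) (V : normedModType R) (ip : V -> V -> R) (h : is_inner ip) x y :
  `|x + y| ^+ 2 = `|x| ^+ 2 + 2 * ip x y + `|y| ^+ 2.
Proof.
have [hs _ hn] := h; rewrite -!hn (ipDl h) !(ipDr h) (hs y x); lra.
Qed.
Lemma ipCS (R : realType) (V : normedModType R) (ip : V -> V -> R) (h : is_inner ip) x y :
  ip x y <= `|x| * `|y|.
Proof.
have E := norm2D h x y.
have H1 := ler_normD x y. have H2 := normr_ge0 (x + y).
have H3 := normr_ge0 x. have H4 := normr_ge0 y.
nra.
Qed.
Lemma ipCSabs (R : realType) (V : normedModType R) (ip : V -> V -> R) (h : is_inner ip) x y :
  `|ip x y| <= `|x| * `|y|.
Proof.
rewrite ler_norml (ipCS h) andbT.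
have := ipCS h (- x) y; rewrite normrN -scaleN1r (ipZl h); lra.
Qed.
End IP.

Lemma quad0 (R : realType) (L Q : R) : 0 <= Q -> (forall t, 0 <= t * L + t ^+ 2 * Q) -> L = 0.
Proof.
move=> hQ h.
have hk : 0 < (Q + 1)^-1 by rewrite invr_gt0; lra.
have hk1 : (Q + 1)^-1 * (Q + 1) = 1 by rewrite mulVf //; apply/eqP; lra.
have := h (- L * (Q + 1)^-1).
set k := (Q + 1)^-1 in hk hk1 * => H.
have : L ^+ 2 * k ^+ 2 <= 0 by nra.
move=> H2.
have : L ^+ 2 <= 0 by nra.
move=> H3; nra.
Qed.
Lemma young (R : realType) (a x y : R) : 0 < a -> x * y <= a / 2 * x ^+ 2 + a^-1 / 2 * y ^+ 2.
Proof.
move=> ha.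
have hk : 0 < a^-1 by rewrite invr_gt0.
have hk1 : a * a^-1 = 1 by rewrite mulfV //; apply/eqP; lra.
set k := a^-1 in hk hk1 *.
have H : 0 <= (a * x - y) ^+ 2 * k by apply: mulr_ge0 => //; [exact: sqr_ge0 | lra].
have E : (a * x - y) ^+ 2 * k = (a * k) * a * x ^+ 2 - 2 * (a * k) * x * y + k * y ^+ 2 by ring.
rewrite hk1 in E; lra.
Qed.

Lemma variational (R : realType) (U Y W G : normedModType R)
  (ipU : U -> U -> R) (ipG : G -> G -> R)
  (hU : is_inner ipU) (hG : is_inner ipG)
  (gd : G) (alpha : R) (halpha : 0 < alpha)
  (A : Y -> W -> R) (B : U -> W -> R) (C : Y -> G)
  (hAlin : forall a x y w, A (a *: x + y) w = a * A x w + A y w)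
  (hBlin : forall a x y w, B (a *: x + y) w = a * B x w + B y w)
  (hClin : forall a x y, C (a *: x + y) = a *: C x + C y)
  (ub : U) (yb : Y)
  (hcons : forall w, A yb w = B ub w)
  (hmin : forall u y, (forall w, A y w = B u w) ->
            Jalpha C gd alpha ub yb <= Jalpha C gd alpha u y)
  (v : U) (z : Y) (hz : forall w, A z w = B v w) :
  alpha * ipU ub v + ipG (C yb - gd) (C z) = 0.
Proof.
have [hsU _ _] := hU; have [hsG _ _] := hG.
apply: (@quad0 R _ (2^-1 * `|C z| ^+ 2 + alpha / 2 * `|v| ^+ 2)).
  apply: addr_ge0; apply: mulr_ge0; rewrite ?exprn_ge0 ?normr_ge0 //; lra.
move=> t.
have hc : forall w, A (t *: z + yb) w = B (t *: v + ub) w.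
  by move=> w; rewrite hAlin hBlin hz hcons.
have := hmin _ _ hc.
rewrite /Jalpha hClin -addrA !(norm2D hG) !(norm2D hU) !normrZ !exprMn
  !real_normK ?num_real // (ipZl hG) (ipZl hU) (hsU v ub) (hsG (C z)).
move=> H; nra.
Qed.

Unset Implicit Arguments. Set Strict Implicit.

Theorem proposition3p1 (R : realType)
  (U W Y G : completeNormedModType R)
  (ipU : U -> U -> R) (ipG : G -> G -> R)
  (hU : is_inner ipU) (hG : is_inner ipG)
  (hW : reflexive_space W) (hY : reflexive_space Y)
  (gd : G) (alpha : R) (halpha : 0 < alpha)
  (A : Y -> W -> R) (B : U -> W -> R) (C : Y -> G)
  (hA : cont_invertible A) (hB : dual_op B) (hC : bounded_linear C)
  (Bs : W -> U) (hBs : forall u w, ipU u (Bs w) = B u w)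
  (Uh : set U) (Yh : set Y) (Wh : set W)
  (hUh : fin_subspace Uh) (hYh : fin_subspace Yh) (hWh : fin_subspace Wh)
  (ub : U) (yb : Y)
  (hcons : forall w, A yb w = B ub w)
  (hmin : forall u y, (forall w, A y w = B u w) ->
            Jalpha C gd alpha ub yb <= Jalpha C gd alpha u y)
  (ubh : U) (ybh : Y) (wbh : W)
  (hubh : Uh ubh) (hybh : Yh ybh) (hwbh : Wh wbh)
  (hconsh : forall wh, Wh wh -> A ybh wh - B ubh wh = 0)
  (hminh : forall u y, Uh u -> Yh y -> (forall wh, Wh wh -> A y wh - B u wh = 0) ->
            Jalpha C gd alpha ubh ybh <= Jalpha C gd alpha u y)
  (hopt1 : forall yh, Yh yh ->
            adj_obs ipG C (C ybh - gd) yh + adj_dual A wbh yh = 0)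
  (hopt2 : alpha *: ubh - orth_proj ipU Uh (Bs wbh) = 0)
  (sigma gamma : R)
  (hsg : (sigma = 4 /\ 2 <= gamma) \/
         (4 < sigma /\ 2 * sigma / (sigma + Num.sqrt (sigma ^+ 2 - 4 * sigma)) < gamma)) :
  let rho_w : Y -> R := fun y => adj_obs ipG C (C ybh - gd) y + adj_dual A wbh y in
  let rho_u : U := alpha *: ubh - Bs wbh in
  let rho_y : W -> R := fun w => A ybh w - B ubh w in
  alpha * `|ubh - ub| ^+ 2 + `|C ybh - C yb| ^+ 2
    <= gamma / alpha * `|Bs (adj_dual_inv A rho_w) + rho_u| ^+ 2
       + sigma * `|C (op_inv A rho_y)| ^+ 2
  /\
  Jalpha C gd alpha ubh ybh - Jalpha C gd alpha ub yb
    <= (2 * alpha)^-1 * `|Bs (adj_dual_inv A rho_w) + rho_u| ^+ 2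
       + ipG (C ybh - gd) (C (op_inv A rho_y)).
Proof.
move=> rho_w rho_u rho_y.
case: hA => [[hAdual hAlin [MA hMA]] hAinj hAsurj [MA' hMA']].
case: hB => hBdual hBlin _.
case: hC => hClin [MC hMC].
have [hsU _ hnU] := hU; have [hsG _ hnG] := hG.
have AlinY : forall w a x y, A (a *: x + y) w = a * A x w + A y w by move=> w a x y; exact: hAlin.
have Ainj : forall y1 y2, (forall w, A y1 w = A y2 w) -> y1 = y2.
  move=> y1 y2 h; apply/subr0_eq/hAinj => w.
  by rewrite (linB (f := fun y => A y w) (AlinY w)) h subrr.
have invE : forall f y, (forall w, A y w = f w) -> op_inv A f = y.
  move=> f y hy; rewrite /op_inv; apply: xget_unique => // y' hy'.
  by apply: Ainj => w; rewrite hy hy'.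
have invP : forall f, is_dual f -> forall w, A (op_inv A f) w = f w.
  move=> f hf; have [y hy] := hAsurj f hf; by rewrite (invE f y hy).
have dual_rho_y : is_dual rho_y.
  split.
    move=> a x y; rewrite /rho_y (proj1 (hAdual ybh)) (proj1 (hBdual ubh)); ring.
  have [M1 h1] := proj2 (hAdual ybh); have [M2 h2] := proj2 (hBdual ubh).
  exists (M1 + M2) => w; rewrite /rho_y.
  have := ler_normB (A ybh w) (B ubh w); have := h1 w; have := h2 w; lra.
set z := op_inv A rho_y.
have hz : forall w, A z w = rho_y w := invP _ dual_rho_y.
have rho_w_lin : forall a x y, rho_w (a *: x + y) = a * rho_w x + rho_w y.
  move=> a x y; rewrite /rho_w /adj_obs /adj_dual hClin (ipDl hG) (ipZl hG) hAlin; ring.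
have [Mw hMw] : exists Mw, forall y, `|rho_w y| <= Mw * `|y|.
  exists (MC * `|C ybh - gd| + MA * `|wbh|) => y.
  rewrite /rho_w /adj_obs /adj_dual.
  have h1 := ipCSabs hG (C y) (C ybh - gd).
  have h2 := hMA y wbh.
  have h3 : `|C y| * `|C ybh - gd| <= MC * `|y| * `|C ybh - gd|.
    by apply: ler_wpM2r => //; exact: hMC.
  have := ler_normD (ipG (C y) (C ybh - gd)) (A y wbh).
  have E : (MC * `|C ybh - gd| + MA * `|wbh|) * `|y| =
           MC * `|y| * `|C ybh - gd| + MA * `|y| * `|wbh| by ring.
  rewrite E; lra.
have [q hq] : exists q, forall y, A y q = rho_w y.
  have phi_lin : forall a (f g : W -> R), is_dual f -> is_dual g ->
      rho_w (op_inv A (fun w => a * f w + g w)) =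
      a * rho_w (op_inv A f) + rho_w (op_inv A g).
    move=> a f g hf hg.
    have -> : op_inv A (fun w => a * f w + g w) = a *: op_inv A f + op_inv A g.
      by apply: invE => w; rewrite hAlin !invP.
    by rewrite rho_w_lin.
  have phi_bd : exists M : R, forall f c, is_dual f -> 0 <= c -> dual_norm_le f c ->
      `|rho_w (op_inv A f)| <= M * c.
    exists (`|Mw| * MA') => f c hf hc hfc.
    have hy : `|op_inv A f| <= MA' * c.
      by apply: hMA' => // w; rewrite invP.
    apply: le_trans (hMw _) _.
    apply: le_trans (_ : `|Mw| * `|op_inv A f| <= _).
      by apply: ler_wpM2r => //; exact: ler_norm.
    by rewrite -mulrA; apply: ler_wpM2l.
  have [w hw] := hW (fun f => rho_w (op_inv A f)) phi_lin phi_bd.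
  exists w => y; have := hw (A y) (hAdual y) => /=.
  by rewrite (invE (A y) y (fun _ => erefl)) => ->.
have {hq}hq : forall y, A y (adj_dual_inv A rho_w) = rho_w y.
  exact: (@xgetPex _ 0 [set w | forall y, A y w = rho_w y] (ex_intro _ q hq)).
set q' := adj_dual_inv A rho_w in hq *.
have AB : forall w x y, A (x - y) w = A x w - A y w := fun w => linB (AlinY w).
have BlinU : forall w a x y, B (a *: x + y) w = a * B x w + B y w.
  by move=> w a x y; exact: hBlin.
have BB : forall w x y, B (x - y) w = B x w - B y w := fun w => linB (BlinU w).
have CB : forall x y, C (x - y) = C x - C y := vlinB hClin.
set e := ubh - ub. set c := C ybh - C yb. set cz := C z.
set r := Bs q' + rho_u.
have hyh : forall w, A (ybh - z - yb) w = B e w.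
  by move=> w; rewrite !AB hz /rho_y hcons BB; ring.
have E1 := variational hU hG halpha hAlin hBlin hClin hcons hmin hyh.
have hCyh : C (ybh - z - yb) = c - cz by rewrite !CB /c /cz addrAC.
rewrite hCyh in E1.
have E2 := hq (ybh - z - yb).
rewrite /rho_w /adj_obs /adj_dual !hyh hCyh in E2.
have E3 : ipU e r = B e q' + alpha * ipU e ubh - B e wbh.
  by rewrite /r /rho_u (ipDr hU) (ipBr hU) (ipZr hU) !hBs; ring.
have F1 := hsG (c - cz) (C ybh - gd).
have F2 : ipG (C ybh - gd) (c - cz) - ipG (C yb - gd) (c - cz) = ipG c c - ipG c cz.
  rewrite -(ipBl hG) -(ipBr hG).
  have -> : C ybh - gd - (C yb - gd) = c by rewrite /c opprB addrA subrK.
  by [].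
have F3 : ipU e e = ipU e ubh - ipU e ub by rewrite {1}/e (ipBr hU).
have F4 := hsU ub e.
have F5 := hnU e. have F6 := hnG c.
have ID : alpha * `|e| ^+ 2 + `|c| ^+ 2 = ipU e r + ipG c cz.
  rewrite -F5 -F6 F3 E3 E2; nra.
have CS1 := ipCS hU e r. have CS2 := ipCS hG c cz.
have Y1 := young `|e| `|r| halpha.
have Y2 := young `|c| `|cz| ltr01.
rewrite invr1 in Y2.
have hk : 0 < alpha^-1 by rewrite invr_gt0.
have hg1 : 1 <= gamma /\ 1 <= sigma.
  case: hsg => [[-> hg] | [hs hg]]; first by split; lra.
  set s := Num.sqrt _ in hg.
  have hs0 : 0 <= s by exact: sqrtr_ge0.
  have hss : s ^+ 2 = sigma ^+ 2 - 4 * sigma by rewrite sqr_sqrtr //; nra.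
  have hsl : s < sigma by nra.
  have hd : 0 < sigma + s by lra.
  have hdk : 2 * sigma / (sigma + s) * (sigma + s) = 2 * sigma.
    by rewrite divfK //; apply/eqP; lra.
  split; last lra.
  have : 1 <= 2 * sigma / (sigma + s) by nra.
  lra.
case: hg1 => hg1 hs1.
have P1 : 0 <= (gamma - 1) * (alpha^-1 * `|r| ^+ 2).
  by apply: mulr_ge0; [lra | apply: mulr_ge0; [lra | exact: sqr_ge0]].
have P2 : 0 <= (sigma - 1) * `|cz| ^+ 2.
  by apply: mulr_ge0; [lra | exact: sqr_ge0].
split.
  have -> : gamma / alpha * `|r| ^+ 2 = alpha^-1 * `|r| ^+ 2 + (gamma - 1) * (alpha^-1 * `|r| ^+ 2) by ring.
  lra.
have N1 : `|C ybh - gd| ^+ 2 = `|c| ^+ 2 + 2 * ipG c (C yb - gd) + `|C yb - gd| ^+ 2.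
  by rewrite -(norm2D hG) /c addrA subrK.
have N2 : `|ubh| ^+ 2 = `|e| ^+ 2 + 2 * ipU e ub + `|ub| ^+ 2.
  by rewrite -(norm2D hU) /e subrK.
have G1 : ipG (C ybh - gd) cz = ipG c cz + ipG (C yb - gd) cz.
  by rewrite -(ipDl hG) /c addrA subrK.
have G2 : ipG (C yb - gd) (c - cz) = ipG (C yb - gd) c - ipG (C yb - gd) cz.
  by rewrite (ipBr hG).
have G3 := hsG c (C yb - gd).
have K : (2 * alpha)^-1 = alpha^-1 / 2 by rewrite invfM mulrC.
rewrite /Jalpha N1 N2 G1 K.
rewrite G2 F4 in E1.
nra.
Qed.
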